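(* Let $(X,T)$ be a weakly mixing topological dynamical system. Then either $BP(X,T)=X^2$ (and in this case $\operatorname{supp}(X,T)$ is a singleton), or $BP(X,T)$ is a first category subset of $X\times X$ disjoint from the set of transitive points of $(X^2,T\times T)$.
   Context: A topological dynamical system $(X,T)$ consists of a non-empty compact metric space $(X,d)$ and a continuous map $T:X\to X$. It is weakly mixing if $(X\times X,T\times T)$ is transitive (for all non-empty open $U,V$, $\{n\ge0:U\cap (T\times T)^{-n}V\ne\emptyset\}$ is infinite). A transitive point is a point with dense forward orbit. A set $F\subset\mathbb{Z}_+$ has Banach density one if for every $\lambda<1$ there is $N\ge1$ with $\#(F\cap I)\ge\lambda\,\#(I)$ for every interval of integers $I\subset\mathbb{Z}_+$ with $\#(I)\ge N$. A pair $(x,y)$ is Banach proximal if for every $\varepsilon>0$ the set $\{n\in\mathbb{Z}_+: d(T^nx,T^ny)<\varepsilon\}$ has Banach density one; $BP(X,T)$ is the set of Banach proximal pairs. $\operatorname{supp}(X,T)$ is the smallest closed set $C\subset X$ with $\mu(C)=1$ for all $T$-invariant Borel probability measures $\mu$. *)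

(* Defs.v *)
From Stdlib Require Import Reals Lra Lia Classical ClassicalEpsilon.
Open Scope R_scope.

Section Topo.
Variable X : Type.
Variable d : X -> X -> R.

Definition is_metric : Prop :=
  (forall x y, 0 <= d x y) /\
  (forall x y, d x y = 0 <-> x = y) /\
  (forall x y, d x y = d y x) /\
  (forall x y z, d x z <= d x y + d y z).

Definition is_open (U : X -> Prop) : Prop :=
  forall x, U x -> exists r, r > 0 /\ forall y, d x y < r -> U y.

Definition is_closed (C : X -> Prop) : Prop := is_open (fun x => ~ C x).

Definition compact_space : Prop :=
  forall (I : Type) (U : I -> X -> Prop),
    (forall i, is_open (U i)) -> (forall x, exists i, U i x) ->
    exists l : list I, forall x, exists i, List.In i l /\ U i x.

Definition closure (A : X -> Prop) : X -> Prop :=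
  fun x => forall eps, eps > 0 -> exists a, A a /\ d x a < eps.

Definition interior (A : X -> Prop) : X -> Prop :=
  fun x => exists r, r > 0 /\ forall y, d x y < r -> A y.

Definition nowhere_dense (A : X -> Prop) : Prop :=
  forall x, ~ interior (closure A) x.

Definition first_category (A : X -> Prop) : Prop :=
  exists B : nat -> X -> Prop,
    (forall n, nowhere_dense (B n)) /\ (forall x, A x -> exists n, B n x).

Inductive borel : (X -> Prop) -> Prop :=
| borel_open U : is_open U -> borel U
| borel_compl A : borel A -> borel (fun x => ~ A x)
| borel_union (A : nat -> X -> Prop) :
    (forall n, borel (A n)) -> borel (fun x => exists n, A n x).

Definition borel_prob_measure (mu : (X -> Prop) -> R) : Prop :=
  (forall A B, (forall x, A x <-> B x) -> mu A = mu B) /\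
  (forall A, borel A -> 0 <= mu A) /\
  mu (fun _ => True) = 1 /\
  (forall A : nat -> X -> Prop,
     (forall n, borel (A n)) ->
     (forall n m x, n <> m -> A n x -> A m x -> False) ->
     infinite_sum (fun n => mu (A n)) (mu (fun x => exists n, A n x))).

Variable T : X -> X.

Definition invariant_measure (mu : (X -> Prop) -> R) : Prop :=
  borel_prob_measure mu /\ forall A, borel A -> mu (fun x => A (T x)) = mu A.

(* supp(X,T) = {x0}: {x0} is the smallest closed set of full measure for
   every T-invariant Borel probability measure *)
Definition supp_is_singleton_at (x0 : X) : Prop :=
  (is_closed (fun x => x = x0) /\
   forall mu, invariant_measure mu -> mu (fun x => x = x0) = 1) /\
  (forall C, is_closed C -> (forall mu, invariant_measure mu -> mu C = 1) -> C x0).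

Definition supp_singleton : Prop := exists x0, supp_is_singleton_at x0.

Definition continuous_map : Prop :=
  forall x eps, eps > 0 -> exists delta, delta > 0 /\
    forall y, d x y < delta -> d (T x) (T y) < eps.

Definition TDS : Prop :=
  inhabited X /\ is_metric /\ compact_space /\ continuous_map.

End Topo.

Arguments is_open {X}. Arguments is_closed {X}. Arguments compact_space {X}.
Arguments closure {X}. Arguments interior {X}. Arguments nowhere_dense {X}.
Arguments first_category {X}. Arguments borel {X}.
Arguments borel_prob_measure {X}. Arguments invariant_measure {X}.
Arguments supp_is_singleton_at {X}. Arguments supp_singleton {X}.
Arguments continuous_map {X}. Arguments TDS {X}. Arguments is_metric {X}.

(* product (max) metric on X * X, inducing the product topology *)
Definition dprod {X : Type} (d : X -> X -> R) (p q : X * X) : R :=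
  Rmax (d (fst p) (fst q)) (d (snd p) (snd q)).

Definition TT {X : Type} (T : X -> X) (p : X * X) : X * X := (T (fst p), T (snd p)).

(* weakly mixing: (X x X, T x T) transitive *)
Definition weakly_mixing {X : Type} (d : X -> X -> R) (T : X -> X) : Prop :=
  forall U V : X * X -> Prop,
    is_open (dprod d) U -> is_open (dprod d) V ->
    (exists p, U p) -> (exists p, V p) ->
    forall N : nat, exists n : nat, (n >= N)%nat /\
      exists p, U p /\ V (Nat.iter n (TT T) p).

Definition transitive_point {Y : Type} (e : Y -> Y -> R) (S : Y -> Y) (y : Y) : Prop :=
  forall w eps, eps > 0 -> exists n : nat, e (Nat.iter n S y) w < eps.

Definition indic (F : nat -> Prop) (n : nat) : nat :=
  if excluded_middle_informative (F n) then 1%nat else 0%nat.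

Fixpoint count_in (F : nat -> Prop) (a L : nat) : nat :=
  match L with
  | O => O
  | S L' => (count_in F a L' + indic F (a + L'))%nat
  end.

(* Banach density one; intervals of integers in Z+ are {a,...,a+L-1} *)
Definition banach_density_one (F : nat -> Prop) : Prop :=
  forall lambda : R, lambda < 1 ->
    exists N : nat, (N >= 1)%nat /\
      forall a L : nat, (L >= N)%nat -> INR (count_in F a L) >= lambda * INR L.

Definition banach_proximal {X : Type} (d : X -> X -> R) (T : X -> X) (x y : X) : Prop :=
  forall eps, eps > 0 ->
    banach_density_one (fun n => d (Nat.iter n T x) (Nat.iter n T y) < eps).

(* Main.v *)
Require Import Defs.
From Stdlib Require Import Reals Lra Lia Classical ClassicalEpsilon FunctionalExtensionality PropExtensionality List Arith Cantor.
Open Scope R_scope.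

Lemma iter_add {A} (f : A -> A) m n x : Nat.iter (m + n) f x = Nat.iter n f (Nat.iter m f x).
Proof.
  induction n as [|n IH]. - rewrite Nat.add_0_r; reflexivity.
  - rewrite Nat.add_succ_r; simpl; rewrite IH; reflexivity.
Qed.

Lemma iter_succ_in {A} (f : A -> A) n x : Nat.iter (S n) f x = Nat.iter n f (f x).
Proof. replace (S n) with (1 + n)%nat by lia. apply iter_add. Qed.

Lemma iter_TT {X} (T : X -> X) n p :
  Nat.iter n (TT T) p = (Nat.iter n T (fst p), Nat.iter n T (snd p)).
Proof. induction n as [|n IH]; simpl. - destruct p; reflexivity. - rewrite IH; reflexivity. Qed.

Lemma iter_fixed {A} (f : A -> A) x n : f x = x -> Nat.iter n f x = x.
Proof. intros H; induction n; simpl; [reflexivity| rewrite IHn; exact H]. Qed.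

Lemma indic_le F n : (indic F n <= 1)%nat.
Proof. unfold indic; destruct excluded_middle_informative; lia. Qed.

Lemma count_le F a L : (count_in F a L <= L)%nat.
Proof. induction L; simpl; [lia|]. pose proof (indic_le F (a+L)); lia. Qed.

Lemma count_mono F G a b L :
  (forall j, (j < L)%nat -> F (a + j)%nat -> G (b + j)%nat) ->
  (count_in F a L <= count_in G b L)%nat.
Proof.
  induction L; intros H; simpl; [lia|].
  assert (IH := IHL (fun j hj => H j (ltac:(lia)))).
  unfold indic; destruct (excluded_middle_informative (F (a+L)%nat)) as [f|f];
   destruct (excluded_middle_informative (G (b+L)%nat)) as [g|g]; try lia.
  exfalso; apply g, H; [lia|exact f].
Qed.

Lemma count_ext F G a b L :
  (forall j, (j < L)%nat -> (F (a + j)%nat <-> G (b + j)%nat)) ->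
  count_in F a L = count_in G b L.
Proof.
  intros H; apply Nat.le_antisymm; apply count_mono; intros j hj; apply H; auto.
Qed.

Lemma count_split F a L1 L2 :
  count_in F a (L1 + L2) = (count_in F a L1 + count_in F (a + L1) L2)%nat.
Proof.
  induction L2; simpl. - rewrite Nat.add_0_r; lia.
  - rewrite Nat.add_succ_r; simpl; rewrite IHL2. replace (a + (L1 + L2))%nat with (a + L1 + L2)%nat by lia; lia.
Qed.

Lemma count_compl F a L : (count_in F a L + count_in (fun n => ~ F n) a L)%nat = L.
Proof.
  induction L; simpl; [lia|]. unfold indic.
  destruct (excluded_middle_informative (F (a+L)%nat));
  destruct (excluded_middle_informative (~ F (a+L)%nat)); try tauto; lia.
Qed.

Lemma count_pos F a L : (0 < count_in F a L)%nat -> exists j, (j < L)%nat /\ F (a + j)%nat.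
Proof.
  induction L; simpl; intros H; [lia|].
  unfold indic in H; destruct (excluded_middle_informative (F (a+L)%nat)).
  - exists L; split; [lia|auto].
  - rewrite Nat.add_0_r in H; destruct (IHL H) as [j [hj fj]]; exists j; split; [lia|auto].
Qed.

Lemma Rmax_lt a b c : a < c -> b < c -> Rmax a b < c.
Proof. intros; unfold Rmax; destruct Rle_dec; lra. Qed.
Lemma Rmax_l' a b : a <= Rmax a b. Proof. apply Rmax_l. Qed.
Lemma Rmax_r' a b : b <= Rmax a b. Proof. apply Rmax_r. Qed.


Lemma dprod_nonneg {X} (d : X -> X -> R) : is_metric d -> forall p q, 0 <= dprod d p q.
Proof. intros [h _] p q; unfold dprod; pose proof (h (fst p) (fst q)); pose proof (Rmax_l (d (fst p) (fst q)) (d (snd p) (snd q))); lra. Qed.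

Lemma dprod_sym {X} (d : X -> X -> R) : is_metric d -> forall p q, dprod d p q = dprod d q p.
Proof. intros [_ [_ [h _]]] p q; unfold dprod; rewrite (h (fst p)), (h (snd p)); reflexivity. Qed.

Lemma dprod_tri {X} (d : X -> X -> R) : is_metric d -> forall p q r, dprod d p r <= dprod d p q + dprod d q r.
Proof.
  intros [_ [_ [_ h]]] p q r; unfold dprod.
  pose proof (h (fst p) (fst q) (fst r)); pose proof (h (snd p) (snd q) (snd r)).
  pose proof (Rmax_l (d (fst p) (fst q)) (d (snd p) (snd q))).
  pose proof (Rmax_r (d (fst p) (fst q)) (d (snd p) (snd q))).
  pose proof (Rmax_l (d (fst q) (fst r)) (d (snd q) (snd r))).
  pose proof (Rmax_r (d (fst q) (fst r)) (d (snd q) (snd r))).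
  unfold Rmax at 1; destruct Rle_dec; lra.
Qed.

Lemma dprod_refl {X} (d : X -> X -> R) : is_metric d -> forall p, dprod d p p = 0.
Proof. intros [_ [h _]] p; unfold dprod; rewrite (proj2 (h _ _) eq_refl), (proj2 (h _ _) eq_refl); unfold Rmax; destruct Rle_dec; lra. Qed.

Lemma dprod_metric {X} (d : X -> X -> R) : is_metric d -> forall p q r,
  0 <= dprod d p q /\ dprod d p q = dprod d q p /\ dprod d p r <= dprod d p q + dprod d q r.
Proof. intros H p q r; split; [apply dprod_nonneg|split; [apply dprod_sym|apply dprod_tri]]; auto. Qed.

Definition pmet {Y} (e : Y -> Y -> R) : Prop :=
  (forall p q, 0 <= e p q) /\ (forall p q, e p q = e q p) /\
  (forall p q r, e p r <= e p q + e q r) /\ (forall p, e p p = 0).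

Lemma metric_pmet {X} (d : X -> X -> R) : is_metric d -> pmet d.
Proof.
  intros H; pose proof H as [a [b [c t]]]; repeat split; auto.
  intros p; apply b; reflexivity.
Qed.

Lemma dprod_pmet {X} (d : X -> X -> R) : is_metric d -> pmet (dprod d).
Proof. intros H; repeat split; intros; [apply dprod_nonneg|apply dprod_sym|apply dprod_tri|apply dprod_refl]; auto. Qed.

Lemma ball_open {Y} (e : Y -> Y -> R) c r : pmet e -> is_open e (fun y => e c y < r).
Proof.
  intros [h0 [hs [ht hr]]] x hx. exists (r - e c x); split; [lra|].
  intros y hy; pose proof (ht c x y); lra.
Qed.

Lemma ball_open' {Y} (e : Y -> Y -> R) c r : pmet e -> is_open e (fun y => e y c < r).
Proof.
  intros H; pose proof H as [h0 [hs [ht hr]]].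
  assert (E : (fun y => e y c < r) = (fun y => e c y < r)).
  { apply functional_extensionality; intros y; rewrite hs; reflexivity. }
  rewrite E; apply ball_open; auto.
Qed.

Lemma cont_iter {X} (d : X -> X -> R) (T : X -> X) : continuous_map d T ->
  forall n x eps, eps > 0 -> exists delta, delta > 0 /\
    forall y, d x y < delta -> d (Nat.iter n T x) (Nat.iter n T y) < eps.
Proof.
  intros hc n; induction n as [|n IH]; intros x eps he.
  - exists eps; split; auto.
  - destruct (hc (Nat.iter n T x) eps he) as [d1 [hd1 H1]].
    destruct (IH x d1 hd1) as [d2 [hd2 H2]].
    exists d2; split; auto. intros y hy; simpl; apply H1, H2, hy.
Qed.

Lemma cont_iter_fin {X} (d : X -> X -> R) (T : X -> X) : continuous_map d T ->
  forall L x eps, eps > 0 -> exists delta, delta > 0 /\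
    forall y, d x y < delta -> forall j, (j < L)%nat -> d (Nat.iter j T x) (Nat.iter j T y) < eps.
Proof.
  intros hc L; induction L as [|L IH]; intros x eps he.
  - exists 1; split; [lra|]. intros; lia.
  - destruct (IH x eps he) as [d1 [hd1 H1]].
    destruct (cont_iter d T hc L x eps he) as [d2 [hd2 H2]].
    exists (Rmin d1 d2); split; [apply Rmin_pos; auto|].
    intros y hy j hj. pose proof (Rmin_l d1 d2); pose proof (Rmin_r d1 d2).
    destruct (Nat.eq_dec j L) as [->|ne]; [apply H2; lra|apply H1; [lra|lia]].
Qed.

Lemma cont_TT_fin {X} (d : X -> X -> R) (T : X -> X) : continuous_map d T ->
  forall L p eps, eps > 0 -> exists delta, delta > 0 /\
    forall q, dprod d p q < delta -> forall j, (j < L)%nat ->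
      dprod d (Nat.iter j (TT T) p) (Nat.iter j (TT T) q) < eps.
Proof.
  intros hc L p eps he.
  destruct (cont_iter_fin d T hc L (fst p) eps he) as [d1 [hd1 H1]].
  destruct (cont_iter_fin d T hc L (snd p) eps he) as [d2 [hd2 H2]].
  exists (Rmin d1 d2); split; [apply Rmin_pos; auto|].
  intros q hq j hj. pose proof (Rmin_l d1 d2); pose proof (Rmin_r d1 d2).
  unfold dprod in hq. pose proof (Rmax_l (d (fst p) (fst q)) (d (snd p) (snd q))).
  pose proof (Rmax_r (d (fst p) (fst q)) (d (snd p) (snd q))).
  rewrite !iter_TT; unfold dprod; simpl. apply Rmax_lt; [apply H1|apply H2]; auto; lra.
Qed.

Lemma bp_transfer {X} (d : X -> X -> R) (T : X -> X) :
  is_metric d -> continuous_map d T -> forall x y,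
  banach_proximal d T x y -> transitive_point (dprod d) (TT T) (x, y) ->
  forall u v, banach_proximal d T u v.
Proof.
  intros hm hc x y hbp htr u v eps he lam hl.
  destruct (hbp (eps/3) ltac:(lra) lam hl) as [N [hN H]].
  exists N; split; auto. intros a L hL.
  set (w := (Nat.iter a T u, Nat.iter a T v)).
  destruct (cont_TT_fin d T hc L w (eps/3) ltac:(lra)) as [dl [hdl Hc]].
  destruct (htr w dl hdl) as [m hm'].
  pose proof (dprod_pmet d hm) as [p0 [ps [pt pr]]].
  pose proof (metric_pmet d hm) as [q0 [qs [qt qr]]].
  rewrite ps in hm'.
  specialize (Hc _ hm').
  eapply Rge_trans; [|apply (H m L hL)].
  apply Rle_ge, le_INR, count_mono.
  intros j hj Fj. specialize (Hc j hj).
  rewrite !iter_TT in Hc. unfold w in Hc; simpl in Hc.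
  simpl in Hc.
  rewrite <- !iter_add in Hc.
  unfold dprod in Hc; simpl in Hc.
  pose proof (Rmax_l (d (Nat.iter (a + j) T u) (Nat.iter (m + j) T x))
                     (d (Nat.iter (a + j) T v) (Nat.iter (m + j) T y))).
  pose proof (Rmax_r (d (Nat.iter (a + j) T u) (Nat.iter (m + j) T x))
                     (d (Nat.iter (a + j) T v) (Nat.iter (m + j) T y))).
  pose proof (qt (Nat.iter (a + j) T u) (Nat.iter (m + j) T x) (Nat.iter (a + j) T v)).
  pose proof (qt (Nat.iter (m + j) T x) (Nat.iter (m + j) T y) (Nat.iter (a + j) T v)).
  rewrite (qs (Nat.iter (m + j) T y)) in *.
  lra.
Qed.

Lemma small_inv eps : eps > 0 -> exists m : nat, / (INR m + 1) < eps.
Proof.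
  intros he. destruct (INR_unbounded (/ eps)) as [m hm]. exists m.
  pose proof (pos_INR m).
  replace eps with (/ / eps) by (field; lra).
  apply Rinv_lt_contravar; [|lra].
  apply Rmult_lt_0_compat; [apply Rinv_0_lt_compat; lra|lra].
Qed.

Lemma inv_pos m : / (INR m + 1) > 0.
Proof. pose proof (pos_INR m); apply Rinv_0_lt_compat; lra. Qed.

Lemma E_nowhere_dense {X} (d : X -> X -> R) (T : X -> X) :
  is_metric d -> continuous_map d T -> weakly_mixing d T -> forall c r, r > 0 ->
  nowhere_dense (dprod d) (fun p => forall n, dprod d (Nat.iter n (TT T) p) c >= r).
Proof.
  intros hm hc hw c r hr q [rho [hrho Hin]].
  pose proof (dprod_pmet d hm) as hp. pose proof hp as [p0 [ps [pt pr]]].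
  assert (e1 : exists p, dprod d q p < rho) by (exists q; rewrite pr; lra).
  assert (e2 : exists p, dprod d p c < r) by (exists c; rewrite pr; lra).
  destruct (hw (fun p => dprod d q p < rho) (fun p => dprod d p c < r)
              (ball_open _ _ _ hp) (ball_open' _ _ _ hp) e1 e2 0%nat)
    as [n [_ [p [Up Vp]]]].
  destruct (cont_TT_fin d T hc (S n) p (r - dprod d (Nat.iter n (TT T) p) c) ltac:(lra))
    as [dl [hdl Hc]].
  destruct (Hin p Up dl hdl) as [a [Ea ha]].
  specialize (Hc a ha n ltac:(lia)). specialize (Ea n).
  pose proof (pt (Nat.iter n (TT T) a) (Nat.iter n (TT T) p) c).
  rewrite ps in Hc. lra.
Qed.

Lemma nets {X} (d : X -> X -> R) : is_metric d -> compact_space d -> forall r, r > 0 ->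
  exists l : list X, forall y, exists x, In x l /\ d x y < r.
Proof.
  intros hm hk r hr. pose proof (metric_pmet d hm) as hp. pose proof hp as [q0 [qs [qt qr]]].
  assert (cov : forall y, exists x, d x y < r) by (intros y; exists y; rewrite qr; lra).
  destruct (hk X (fun x y => d x y < r) (fun x => ball_open _ _ _ hp) cov)
    as [l Hl].
  exists l; intros y; destruct (Hl y) as [x [h1 h2]]; eauto.
Qed.

Lemma nontrans_first_category {X} (d : X -> X -> R) (T : X -> X) :
  TDS d T -> weakly_mixing d T ->
  first_category (dprod d) (fun p => ~ transitive_point (dprod d) (TT T) p).
Proof.
  intros [[x0] [hm [hk hc]]] hw.
  assert (Hn : forall m : nat, exists l : list X, forall y, exists x, In x l /\ d x y < / (INR m + 1))
    by (intros m; apply nets; auto; apply inv_pos).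
  set (net := fun m => proj1_sig (constructive_indefinite_description _ (Hn m))).
  assert (Hnet : forall m y, exists x, In x (net m) /\ d x y < / (INR m + 1))
    by (intros m; exact (proj2_sig (constructive_indefinite_description _ (Hn m)))).
  exists (fun k => let '(m, ij) := of_nat k in let '(i, j) := of_nat ij in
            fun p => forall n, dprod d (Nat.iter n (TT T) p) (nth i (net m) x0, nth j (net m) x0) >= / (INR m + 1)).
  split.
  - intros k. destruct (of_nat k) as [m ij]; destruct (of_nat ij) as [i j].
    apply E_nowhere_dense; auto; apply inv_pos.
  - intros p hnt.
    assert (exists w eps, eps > 0 /\ forall n, dprod d (Nat.iter n (TT T) p) w >= eps) as [w [eps [he Hw]]].
    { apply NNPP; intros C; apply hnt; intros w eps he.
      apply NNPP; intros C2; apply C; exists w, eps; split; auto.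
      intros n; apply Rnot_lt_ge; intros h; apply C2; eauto. }
    destruct (small_inv (eps/2) ltac:(lra)) as [m hm'].
    destruct (Hnet m (fst w)) as [x1 [i1 h1]]. destruct (Hnet m (snd w)) as [x2 [i2 h2]].
    destruct (In_nth _ _ x0 i1) as [i [_ ei]]. destruct (In_nth _ _ x0 i2) as [j [_ ej]].
    exists (to_nat (m, to_nat (i, j))). rewrite !cancel_of_to. rewrite ei, ej.
    intros n. pose proof (dprod_pmet d hm) as [p0 [ps [pt pr]]].
    pose proof (pt (Nat.iter n (TT T) p) (x1, x2) w). specialize (Hw n).
    assert (dprod d (x1, x2) w < / (INR m + 1)) by (unfold dprod; simpl; apply Rmax_lt; auto).
    pose proof (inv_pos m). lra.
Qed.

Lemma list_max_bound (l : list nat) : exists K, forall i, In i l -> (i <= K)%nat.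
Proof.
  induction l as [|a l [K HK]]. - exists 0%nat; intros i [].
  - exists (Nat.max a K); intros i [->|h]; [lia|specialize (HK i h); lia].
Qed.

Lemma inv_anti (k K : nat) : (k <= K)%nat -> / (INR K + 1) <= / (INR k + 1).
Proof.
  intros h; apply le_INR in h; pose proof (pos_INR k).
  apply Rinv_le_contravar; lra.
Qed.

Lemma fixed_point {X} (d : X -> X -> R) (T : X -> X) :
  TDS d T -> (forall x y, banach_proximal d T x y) -> exists z, T z = z.
Proof.
  intros [[x0] [hm [hk hc]]] hbp.
  pose proof (metric_pmet d hm) as hp; pose proof hp as [q0 [qs [qt qr]]].
  set (F := fun (k : nat) z => d z (T z) <= / (INR k + 1)).
  assert (Fne : forall k, exists z, F k z).
  { intros k. destruct (hbp x0 (T x0) (/ (INR k + 1)) (inv_pos k) (1/2) ltac:(lra)) as [N [hN H]].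
    specialize (H 0%nat N (le_n _)).
    assert (hpos : (0 < count_in (fun n => (d (Nat.iter n T x0) (Nat.iter n T (T x0)) < / (INR k + 1))%R) 0 N)%nat).
    { apply INR_lt; simpl. apply le_INR in hN; simpl in hN; lra. }
    destruct (count_pos _ _ _ hpos) as [j [_ hj]]. exists (Nat.iter j T x0).
    unfold F; simpl in hj. rewrite <- iter_succ_in in hj; simpl in hj; lra. }
  assert (Fop : forall k, is_open d (fun z => ~ F k z)).
  { intros k z hz. unfold F in hz. apply Rnot_le_gt in hz.
    set (g := d z (T z) - / (INR k + 1)).
    destruct (hc z (g/2) ltac:(unfold g; lra)) as [dl [hdl Hd]].
    exists (Rmin dl (g/2)); split; [apply Rmin_pos; unfold g; lra|].
    intros w hw. pose proof (Rmin_l dl (g/2)); pose proof (Rmin_r dl (g/2)).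
    specialize (Hd w ltac:(lra)). unfold F. 
    pose proof (qt z w (T z)). pose proof (qt w (T w) (T z)). rewrite (qs (T w) (T z)) in *.
    unfold g in *; lra. }
  assert (exists z, forall k, F k z) as [z Hz].
  { apply NNPP; intros C.
    assert (cov : forall z, exists k, ~ F k z).
    { intros z; apply NNPP; intros C2; apply C; exists z; intros k; apply NNPP; intros C3; apply C2; eauto. }
    destruct (hk nat (fun k z => ~ F k z) Fop cov) as [l Hl].
    destruct (list_max_bound l) as [K HK]. destruct (Fne K) as [z hz].
    destruct (Hl z) as [i [hi ni]]. apply ni. unfold F in *.
    pose proof (inv_anti i K (HK i hi)); lra. }
  exists z. apply eq_sym, hm.
  destruct (Rle_lt_or_eq_dec 0 (d z (T z)) (q0 _ _)) as [hlt|heq]; [|auto].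
  destruct (small_inv _ hlt) as [k hk']. specialize (Hz k); unfold F in Hz; lra.
Qed.

Lemma pred_ext {X} (A B : X -> Prop) : (forall x, A x <-> B x) -> A = B.
Proof. intros H; apply functional_extensionality; intros x; apply propositional_extensionality; auto. Qed.

Lemma borel_ext {X} (d : X -> X -> R) (A B : X -> Prop) : (forall x, A x <-> B x) -> borel d A -> borel d B.
Proof. intros H; rewrite (pred_ext A B H); auto. Qed.

Lemma borel_True {X} (d : X -> X -> R) : borel d (fun _ => True).
Proof. apply borel_open; intros x _; exists 1; split; [lra|auto]. Qed.

Lemma borel_False {X} (d : X -> X -> R) : borel d (fun _ => False).
Proof. eapply borel_ext; [|apply borel_compl, borel_True]; intros x; tauto. Qed.

Lemma borel_inter {X} (d : X -> X -> R) P Q : borel d P -> borel d Q -> borel d (fun x => P x /\ Q x).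
Proof.
  intros hP hQ.
  set (C := fun n : nat => match n with 0%nat => fun x => ~ P x | _ => fun x => ~ Q x end).
  apply (borel_ext d (fun x => ~ exists n, C n x)).
  - intros x; split.
    + intros H; split; apply NNPP; intros h; apply H; [exists 0%nat|exists 1%nat]; exact h.
    + intros [p q] [n hn]; destruct n; simpl in hn; tauto.
  - apply borel_compl, borel_union; intros [|n]; apply borel_compl; auto.
Qed.

Lemma borel_compl' {X} (d : X -> X -> R) P : borel d P -> borel d (fun x => ~ P x).
Proof. apply borel_compl. Qed.

Lemma borel_preimage {X} (d : X -> X -> R) (T : X -> X) :
  continuous_map d T -> forall A, borel d A -> borel d (fun x => A (T x)).
Proof.
  intros hc A HB; induction HB as [U hU|A hA IH|A hA IH].
  - apply borel_open; intros x hx. destruct (hU (T x) hx) as [r [hr Hr]].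
    destruct (hc x r hr) as [dl [hdl Hd]]. exists dl; split; auto.
  - apply borel_compl; auto.
  - exact (borel_union _ _ (fun n x => A n (T x)) IH).
Qed.

Lemma borel_preimage_iter {X} (d : X -> X -> R) (T : X -> X) :
  continuous_map d T -> forall n A, borel d A -> borel d (fun x => A (Nat.iter n T x)).
Proof.
  intros hc n; induction n; intros A hA; simpl; auto.
  apply (IHn (fun y => A (T y))). apply borel_preimage; auto.
Qed.

Lemma sum_const c n : sum_f_R0 (fun _ => c) n = (INR n + 1) * c.
Proof. induction n; [simpl; lra|]. replace (sum_f_R0 (fun _ => c) (S n)) with (sum_f_R0 (fun _ => c) n + c) by reflexivity. rewrite IHn, S_INR; lra. Qed.

Lemma infinite_sum_ev s l N0 : (forall n, (n >= N0)%nat -> sum_f_R0 s n = l) -> infinite_sum s l.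
Proof.
  intros H eps he. exists N0; intros n hn. rewrite H; auto. unfold R_dist; rewrite Rminus_diag, Rabs_R0; lra.
Qed.

Lemma mu_empty {X} (d : X -> X -> R) mu : borel_prob_measure d mu -> mu (fun _ => False) = 0.
Proof.
  intros [hext [hnn [htot hadd]]].
  assert (hs := hadd (fun _ _ => False) (fun _ => borel_False d) (fun n m x _ h _ => h)).
  cbv beta in hs. rewrite (hext (fun x => exists n : nat, False) (fun _ => False)) in hs by (intros x; split; [intros [_ f]; exact f|tauto]).
  set (c := mu (fun _ => False)) in *.
  destruct (Req_dec c 0) as [|hc]; auto. exfalso.
  destruct (hs (Rabs c / 2)) as [N HN]. { pose proof (Rabs_pos_lt c hc); lra. }
  specialize (HN (S N) ltac:(lia)). unfold R_dist in HN. rewrite sum_const, S_INR in HN.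
  replace ((INR N + 1 + 1) * c - c) with ((INR N + 1) * c) in HN by ring.
  rewrite Rabs_mult, (Rabs_right (INR N + 1)) in HN by (pose proof (pos_INR N); lra).
  pose proof (pos_INR N); pose proof (Rabs_pos_lt c hc). nra.
Qed.

Lemma mu_add {X} (d : X -> X -> R) mu : borel_prob_measure d mu -> forall P Q, borel d P -> borel d Q ->
  mu P = mu (fun x => P x /\ Q x) + mu (fun x => P x /\ ~ Q x).
Proof.
  intros hmu P Q hP hQ. pose proof (mu_empty d mu hmu) as h0.
  destruct hmu as [hext [hnn [htot hadd]]].
  set (A := fun n : nat => match n with 0%nat => fun x => P x /\ Q x | 1%nat => fun x => P x /\ ~ Q x | _ => fun _ => False end).
  assert (hb : forall n, borel d (A n)).
  { intros [|[|n]]; simpl; [apply borel_inter|apply borel_inter|apply borel_False]; auto. apply borel_compl; auto. }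
  assert (hdis : forall n m x, n <> m -> A n x -> A m x -> False).
  { intros [|[|n]] [|[|m]] x hnm; simpl; try tauto; lia. }
  pose proof (hadd A hb hdis) as hs.
  rewrite (hext (fun x => exists n, A n x) P) in hs.
  2:{ intros x; split. - intros [[|[|n]] hn]; simpl in hn; tauto.
      - intros hp; destruct (classic (Q x)); [exists 0%nat|exists 1%nat]; simpl; tauto. }
  apply (uniqueness_sum _ _ _ hs). apply (infinite_sum_ev _ _ 1%nat).
  intros n hn. induction n as [|n IH]; [lia|].
  destruct n; [simpl; reflexivity|]. simpl sum_f_R0 in *. rewrite IH by lia.
  simpl. rewrite h0; ring.
Qed.

Lemma mu_mono {X} (d : X -> X -> R) mu : borel_prob_measure d mu -> forall D A, borel d D -> borel d A ->
  (forall x, D x -> A x) -> mu D <= mu A.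
Proof.
  intros hmu D A hD hA hsub. rewrite (mu_add d mu hmu A D hA hD).
  pose proof hmu as [hext [hnn _]].
  rewrite (hext (fun x => A x /\ D x) D) by (intros x; split; [tauto|auto]).
  pose proof (hnn (fun x => A x /\ ~ D x) ltac:(apply borel_inter; auto; apply borel_compl; auto)); lra.
Qed.

Lemma mu_inv_iter {X} (d : X -> X -> R) (T : X -> X) mu : continuous_map d T -> invariant_measure d T mu ->
  forall n A, borel d A -> mu (fun x => A (Nat.iter n T x)) = mu A.
Proof.
  intros hc [hmu hinv] n; induction n; intros A hA; simpl; [reflexivity|].
  rewrite (IHn (fun y => A (T y))) by (apply borel_preimage; auto). apply hinv; auto.
Qed.

Fixpoint sumL (f : nat -> R) (L : nat) : R :=
  match L with O => 0 | S L' => sumL f L' + f L' end.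

Lemma sumL_ext f g L : (forall n, (n < L)%nat -> f n = g n) -> sumL f L = sumL g L.
Proof. induction L; intros H; simpl; auto. rewrite IHL by (intros; apply H; lia). rewrite H by lia; auto. Qed.

Lemma sumL_plus f g L : sumL (fun n => f n + g n) L = sumL f L + sumL g L.
Proof. induction L; simpl; [lra|rewrite IHL; lra]. Qed.

Lemma sumL_const c L : sumL (fun _ => c) L = INR L * c.
Proof. induction L; simpl sumL; [simpl; lra|rewrite IHL, S_INR; lra]. Qed.

Lemma meas_count {X} (d : X -> X -> R) mu : borel_prob_measure d mu ->
  forall (B : nat -> X -> Prop), (forall n, borel d (B n)) ->
  forall L S c, borel d S -> (forall z, S z -> INR (count_in (fun n => B n z) 0 L) <= c) ->
  sumL (fun n => mu (fun x => B n x /\ S x)) L <= c * mu S.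
Proof.
  intros hmu B hB L. pose proof (mu_empty d mu hmu) as h0. pose proof hmu as [hext [hnn _]].
  induction L as [|L IH]; intros S c hS Hc; simpl sumL.
  - destruct (classic (exists z, S z)) as [[z hz]|nz].
    + specialize (Hc z hz); simpl count_in in Hc; rewrite INR_0 in Hc. pose proof (hnn S hS). apply Rmult_le_pos; lra.
    + rewrite (hext S (fun _ => False)) by (intros x; split; [intros h; apply nz; eauto|tauto]). rewrite h0; lra.
  - set (S1 := fun z => S z /\ B L z). set (S2 := fun z => S z /\ ~ B L z).
    assert (hS1 : borel d S1) by (apply borel_inter; auto).
    assert (hS2 : borel d S2) by (apply borel_inter; auto; apply borel_compl; auto).
    assert (I1 : sumL (fun n => mu (fun x => B n x /\ S1 x)) L <= (c - 1) * mu S1).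
    { apply IH; auto. intros z [hz hb]. specialize (Hc z hz). simpl count_in in Hc.
      rewrite plus_INR in Hc. unfold indic in Hc. simpl Nat.add in Hc.
      destruct excluded_middle_informative as [_|n]; [simpl INR in Hc; lra|tauto]. }
    assert (I2 : sumL (fun n => mu (fun x => B n x /\ S2 x)) L <= c * mu S2).
    { apply IH; auto. intros z [hz hb]. specialize (Hc z hz). simpl count_in in Hc.
      rewrite plus_INR in Hc. pose proof (pos_INR (indic (fun n => B n z) L)). lra. }
    rewrite (sumL_ext _ (fun n => mu (fun x => B n x /\ S1 x) + mu (fun x => B n x /\ S2 x))).
    2:{ intros n _. rewrite (mu_add d mu hmu (fun x => B n x /\ S x) (B L)) by (auto; apply borel_inter; auto).
        f_equal; apply hext; intros x; unfold S1, S2; tauto. }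
    rewrite sumL_plus.
    rewrite (mu_add d mu hmu S (B L) hS (hB L)). fold S1 S2.
    rewrite (hext (fun x => B L x /\ S x) S1) by (intros x; unfold S1; tauto).
    lra.
Qed.

Definition bad {X} (d : X -> X -> R) (T : X -> X) x0 eps z L :=
  count_in (fun n => ~ d (Nat.iter n T z) x0 < eps) 0 L.

Lemma uniform_bad {X} (d : X -> X -> R) (T : X -> X) x0 :
  TDS d T -> T x0 = x0 -> (forall x y, banach_proximal d T x y) ->
  forall eps lam, eps > 0 -> lam < 1 ->
  exists M, (1 <= M)%nat /\ forall z, exists l, (1 <= l)%nat /\ (l <= M)%nat /\
    INR (bad d T x0 eps z l) <= (1 - lam) * INR l.
Proof.
  intros [_ [hm [hk hc]]] hfix hbp eps lam he hl.
  pose proof (metric_pmet d hm) as hp; pose proof hp as [q0 [qs [qt qr]]].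
  set (P := fun w l => (1 <= l)%nat /\ INR (bad d T x0 eps w l) <= (1 - lam) * INR l).
  set (U := fun (N : nat) z => exists dl, dl > 0 /\ forall w, d z w < dl -> exists l, (l <= N)%nat /\ P w l).
  assert (Uop : forall N, is_open d (U N)).
  { intros N z [dl [hdl H]]. exists (dl/2); split; [lra|]. intros y hy.
    exists (dl/2); split; [lra|]. intros w hw. apply H. pose proof (qt z y w); lra. }
  assert (cov : forall z, exists N, U N z).
  { intros z. destruct (hbp z x0 (eps/2) ltac:(lra) lam hl) as [N [hN HN]].
    specialize (HN 0%nat N (le_n _)).
    destruct (cont_iter_fin d T hc N z (eps/2) ltac:(lra)) as [dl [hdl Hd]].
    exists N, dl; split; auto. intros w hw. exists N; split; auto. split; auto.
    unfold bad.
    pose proof (count_compl (fun n => d (Nat.iter n T w) x0 < eps) 0 N) as hcc.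
    assert (hmono : (count_in (fun n => (d (Nat.iter n T z) (Nat.iter n T x0) < eps / 2)%R) 0 N <=
                     count_in (fun n => (d (Nat.iter n T w) x0 < eps)%R) 0 N)%nat).
    { apply count_mono. intros j hj Fj. simpl in *. rewrite (iter_fixed T x0 j hfix) in Fj.
      specialize (Hd w hw j hj). pose proof (qt (Nat.iter j T w) (Nat.iter j T z) x0).
      rewrite qs in Hd. lra. }
    apply le_INR in hmono. apply (f_equal INR) in hcc. rewrite plus_INR in hcc. lra. }
  destruct (hk nat U Uop cov) as [l Hl]. destruct (list_max_bound l) as [K HK].
  exists (Nat.max K 1); split; [lia|]. intros z.
  destruct (Hl z) as [N [hN [dl [hdl H]]]]. destruct (H z ltac:(rewrite qr; lra)) as [l0 [hl0 [h1 h2]]].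
  exists l0; split; [auto|split; [specialize (HK N hN); lia|auto]].
Qed.

Lemma stopping {X} (d : X -> X -> R) (T : X -> X) x0 eps lam M :
  lam < 1 ->
  (forall z, exists l, (1 <= l)%nat /\ (l <= M)%nat /\ INR (bad d T x0 eps z l) <= (1 - lam) * INR l) ->
  forall K z, INR (bad d T x0 eps z K) <= (1 - lam) * INR K + INR M.
Proof.
  intros hl H K.
  assert (G : forall K0 K', (K' <= K0)%nat -> forall z, INR (bad d T x0 eps z K') <= (1 - lam) * INR K' + INR M).
  2:{ apply (G K K); lia. }
  induction K0 as [|K0 IH]; intros K' hK' z.
  - assert (K' = 0%nat) by lia; subst. unfold bad; simpl. pose proof (pos_INR M); lra.
  - destruct (le_lt_dec K' M) as [hle|hgt].
    + pose proof (count_le (fun n => ~ d (Nat.iter n T z) x0 < eps) 0 K') as h.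
      apply le_INR in h, hle. pose proof (pos_INR K'). unfold bad. nra.
    + destruct (H z) as [l [h1 [h2 h3]]].
      replace K' with (l + (K' - l))%nat by lia. unfold bad. rewrite count_split.
      rewrite (count_ext (fun n => ~ d (Nat.iter n T z) x0 < eps) (fun n => ~ d (Nat.iter n T (Nat.iter l T z)) x0 < eps) (0 + l)%nat 0%nat).
      2:{ intros j hj. replace (0 + l + j)%nat with (l + j)%nat by lia. rewrite Nat.add_0_l, iter_add. tauto. }
      specialize (IH (K' - l)%nat ltac:(lia) (Nat.iter l T z)). unfold bad in IH, h3.
      rewrite !plus_INR. lra.
Qed.

Lemma mu_far_zero {X} (d : X -> X -> R) (T : X -> X) x0 mu :
  TDS d T -> T x0 = x0 -> (forall x y, banach_proximal d T x y) ->
  invariant_measure d T mu ->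
  forall eps, eps > 0 -> mu (fun z => ~ d z x0 < eps) = 0.
Proof.
  intros htds hfix hbp hinv eps he. pose proof htds as [_ [hm [hk hc]]].
  pose proof hinv as [hmu _]. pose proof hmu as [hext [hnn [htot _]]].
  pose proof (metric_pmet d hm) as hp.
  set (A := fun z => ~ d z x0 < eps).
  assert (hA : borel d A) by (apply borel_compl, borel_open, ball_open'; auto).
  assert (key : forall lam, lam < 1 -> mu A <= 1 - lam).
  { intros lam hl. destruct (uniform_bad d T x0 htds hfix hbp eps lam he hl) as [M [hM HM]].
    pose proof (stopping d T x0 eps lam M hl HM) as HS.
    assert (hK : forall K, INR K * mu A <= (1 - lam) * INR K + INR M).
    { intros K.
      pose proof (meas_count d mu hmu (fun n x => A (Nat.iter n T x))
                   (fun n => borel_preimage_iter d T hc n A hA) K (fun _ => True) ((1 - lam) * INR K + INR M)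
                   (borel_True d) (fun z _ => HS K z)) as h.
      rewrite htot, Rmult_1_r in h.
      rewrite (sumL_ext _ (fun _ => mu A)) in h. 2:{ intros n _.
        rewrite (hext _ (fun x => A (Nat.iter n T x))) by tauto. apply (mu_inv_iter d T mu hc hinv n A hA). }
      rewrite sumL_const in h. exact h. }
    apply Rnot_lt_le; intros C.
    set (g := mu A - (1 - lam)).
    destruct (INR_unbounded (INR M / g)) as [K hK'].
    specialize (hK K). pose proof (pos_INR M).
    assert (INR K * g > INR M).
    { assert (hg : g > 0) by (unfold g; lra). apply (Rmult_lt_compat_r g) in hK'; [|lra]. unfold Rdiv in hK'. rewrite Rmult_assoc, Rinv_l, Rmult_1_r in hK' by lra. lra. }
    unfold g in *; nra. }
  pose proof (hnn A hA). destruct (Rle_lt_or_eq_dec 0 (mu A) H) as [hlt|heq]; [|auto].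
  specialize (key (1 - mu A / 2) ltac:(lra)). lra.
Qed.

Lemma singleton_closed {X} (d : X -> X -> R) x0 : is_metric d -> is_closed d (fun x => x = x0).
Proof.
  intros hm x hx. pose proof (metric_pmet d hm) as [q0 [qs [qt qr]]].
  exists (d x x0); split.
  - destruct (Rle_lt_or_eq_dec 0 _ (q0 x x0)) as [h|h]; [lra|]. exfalso; apply hx, hm; auto.
  - intros y hy ->. lra.
Qed.

Definition dirac {X} (x0 : X) (A : X -> Prop) : R :=
  if excluded_middle_informative (A x0) then 1 else 0.

Lemma dirac_inv {X} (d : X -> X -> R) (T : X -> X) x0 : T x0 = x0 -> invariant_measure d T (dirac x0).
Proof.
  intros hfix. split; [repeat split|].
  - intros A B H; unfold dirac; destruct excluded_middle_informative as [a|a];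
      destruct excluded_middle_informative as [b|b]; auto; exfalso; firstorder.
  - intros A _; unfold dirac; destruct excluded_middle_informative; lra.
  - unfold dirac; destruct excluded_middle_informative; tauto.
  - intros A _ hdis. destruct (classic (exists k, A k x0)) as [[k hk]|nk].
    + assert (hs : forall n, sum_f_R0 (fun n => dirac x0 (A n)) n = if le_lt_dec k n then 1 else 0).
      { induction n.
        - simpl; unfold dirac; destruct excluded_middle_informative as [a|a];
          destruct le_lt_dec as [l|l]; auto.
          + exfalso; apply (hdis 0%nat k x0); auto; lia.
          + assert (k = 0%nat) by lia; subst; tauto.
        - simpl sum_f_R0. rewrite IHn. unfold dirac; destruct excluded_middle_informative as [a|a];
          destruct (le_lt_dec k n) as [l|l]; destruct (le_lt_dec k (S n)) as [l'|l']; try lia; try lra.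
          all: first [ exfalso; apply (hdis (S n) k x0); auto; lia
                     | assert (k = S n) by lia; subst; tauto ]. }
      apply (infinite_sum_ev _ _ k). intros n hn. rewrite hs. unfold dirac.
      destruct le_lt_dec; [|lia]. destruct excluded_middle_informative as [_|c]; auto; exfalso; eauto.
    + apply (infinite_sum_ev _ _ 0%nat). intros n _.
      assert (hs : forall n, sum_f_R0 (fun n => dirac x0 (A n)) n = 0).
      { intros m; induction m; simpl; unfold dirac in *; destruct excluded_middle_informative; try lra;
          exfalso; eauto. }
      rewrite hs. unfold dirac; destruct excluded_middle_informative as [[j hj]|]; auto; exfalso; eauto.
  - intros A _. unfold dirac. rewrite hfix. reflexivity.
Qed.

Lemma mu_point {X} (d : X -> X -> R) (T : X -> X) x0 mu :
  TDS d T -> T x0 = x0 -> (forall x y, banach_proximal d T x y) ->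
  invariant_measure d T mu -> mu (fun x => x = x0) = 1.
Proof.
  intros htds hfix hbp hinv. pose proof htds as [_ [hm [hk hc]]].
  pose proof hinv as [hmu _]. pose proof hmu as [hext [hnn [htot hadd]]].
  pose proof (metric_pmet d hm) as hp. pose proof hp as [q0 [qs [qt qr]]].
  set (A := fun (k : nat) z => ~ d z x0 < / (INR k + 1)).
  assert (hA : forall k, borel d (A k)) by (intros k; apply borel_compl, borel_open, ball_open'; auto).
  assert (hA0 : forall k, mu (A k) = 0) by (intros k; apply (mu_far_zero d T x0 mu); auto; apply inv_pos).
  assert (Amono : forall n m z, (n <= m)%nat -> A n z -> A m z).
  { intros n m z h an am. apply an. pose proof (inv_anti n m h). lra. }
  set (D := fun k : nat => match k with 0%nat => A 0%nat | S j => fun z => A (S j) z /\ ~ A j z end).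
  assert (hD : forall k, borel d (D k)).
  { intros [|k]; simpl; auto. apply borel_inter; auto. apply borel_compl; auto. }
  assert (hDA : forall k z, D k z -> A k z) by (intros [|k] z; simpl; tauto).
  assert (hdis : forall n m x, n <> m -> D n x -> D m x -> False).
  { assert (gen : forall n m x, (n < m)%nat -> D n x -> D m x -> False).
    { intros n m x hnm dn dm. destruct m as [|m]; [lia|]. simpl in dm. apply (proj2 dm).
      apply (Amono n m x); [lia|auto]. }
    intros n m x hnm dn dm. destruct (Nat.lt_total n m) as [h|[h|h]]; [eauto|tauto|eauto]. }
  assert (hD0 : forall k, mu (D k) = 0).
  { intros k. pose proof (mu_mono d mu hmu (D k) (A k) (hD k) (hA k) (hDA k)). rewrite hA0 in H.
    pose proof (hnn _ (hD k)); lra. }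
  pose proof (hadd D hD hdis) as hs.
  assert (hz : mu (fun x => exists n, D n x) = 0).
  { apply (uniqueness_sum _ _ _ hs). apply (infinite_sum_ev _ _ 0%nat). intros n _.
    induction n; [exact (hD0 0%nat)|]. replace (sum_f_R0 (fun n => mu (D n)) (S n)) with (sum_f_R0 (fun n => mu (D n)) n + mu (D (S n))) by reflexivity. rewrite IHn, hD0; lra. }
  assert (hunion : forall x, (exists n, D n x) <-> ~ x = x0).
  { intros x; split.
    - intros [n hn] ->. apply (hDA n x0 hn). rewrite qr. apply inv_pos.
    - intros hne. assert (hpos : d x x0 > 0).
      { destruct (Rle_lt_or_eq_dec 0 _ (q0 x x0)) as [h|h]; [lra|]. exfalso; apply hne, hm; auto. }
      destruct (small_inv _ hpos) as [k hk'].
      assert (Ak : A k x) by (unfold A; lra).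
      clear hk'. induction k as [|k IH].
      + exists 0%nat; exact Ak.
      + destruct (classic (A k x)) as [h|h]; [apply IH; auto|exists (S k); simpl; auto]. }
  rewrite (hext _ (fun x => ~ x = x0) hunion) in hz.
  assert (hb : borel d (fun x => x = x0)).
  { apply (borel_ext d (fun x => ~ ~ x = x0)); [intros; tauto|].
    apply borel_compl, borel_open, (singleton_closed d x0 hm). }
  pose proof (mu_add d mu hmu (fun _ => True) (fun x => x = x0) (borel_True d) hb) as h.
  rewrite htot in h.
  rewrite (hext (fun x => True /\ x = x0) (fun x => x = x0)) in h by tauto.
  rewrite (hext (fun x => True /\ ~ x = x0) (fun x => ~ x = x0)) in h by tauto.
  lra.
Qed.

Theorem mainTheorem10 (X : Type) (d : X -> X -> R) (T : X -> X) :
  TDS d T -> weakly_mixing d T ->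
  ((forall x y : X, banach_proximal d T x y) /\ supp_singleton d T)
  \/
  (first_category (dprod d) (fun p : X * X => banach_proximal d T (fst p) (snd p)) /\
   (forall p : X * X, banach_proximal d T (fst p) (snd p) ->
      ~ transitive_point (dprod d) (TT T) p)).
Proof.
  intros htds hw. pose proof htds as [_ [hm [hk hc]]].
  destruct (classic (exists p : X * X, banach_proximal d T (fst p) (snd p) /\
                                       transitive_point (dprod d) (TT T) p)) as [[[x y] [hb ht]]|nex].
  - left. assert (hall : forall u v, banach_proximal d T u v) by (apply (bp_transfer d T hm hc x y); auto).
    split; auto.
    destruct (fixed_point d T htds hall) as [x0 hfix]. exists x0.
    split; [split|].
    + apply singleton_closed; auto.
    + intros mu hinv; apply (mu_point d T x0 mu); auto.
    + intros C hC Hall. specialize (Hall (dirac x0) (dirac_inv d T x0 hfix)).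
      unfold dirac in Hall; destruct excluded_middle_informative; auto. lra.
  - right. assert (hn : forall p, banach_proximal d T (fst p) (snd p) -> ~ transitive_point (dprod d) (TT T) p)
      by (intros p h1 h2; apply nex; eauto).
    split; auto.
    destruct (nontrans_first_category d T htds hw) as [B [HB Hc]].
    exists B; split; auto.
Qed.
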